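(* Let $G$ be a nonabelian group, let $\psi\in\operatorname{End}(G)$ satisfy $\psi([G,G])\le Z(G)$, and let $\alpha,\beta\in\mathscr{E}$. Write $\psi_\alpha=\psi\circ\alpha:G\to G$. Then for all $g,h\in G$: (1) $\psi_\alpha(1_G)=1_G$; (2) $\psi_{\alpha+\beta}(g)\equiv\psi_{\beta+\alpha}(g)\pmod{Z(G)}$; (3) $\psi_\alpha(gh)\equiv\psi_\alpha(g)\psi_\alpha(h)\pmod{Z(G)}$; (4) $\psi_\alpha(g)^{-1}\equiv\psi_\alpha(g^{-1})\pmod{Z(G)}$; (5) $\psi_\alpha(gh)\psi_\alpha(g)^{-1}\equiv\psi_\alpha(h)\pmod{Z(G)}$.
   Context: $Z(G)$ is the center and $[G,G]$ the commutator subgroup of $G$. For $x,y\in G$, $x\equiv y\pmod{Z(G)}$ means $x=yz$ for some $z\in Z(G)$. $\mathscr{E}$ denotes the set of formal expressions $\alpha=n_1\phi_1+\cdots+n_t\phi_t$ with $t\ge 0$, $n_i\in\mathbb Z$, $\phi_i\in\operatorname{End}(G)$ (the free group generated by $\operatorname{End}(G)$, written additively, with sum $\alpha+\beta$ given by concatenation), acting on $G$ by $\alpha(g)=\phi_1(g^{n_1})\phi_2(g^{n_2})\cdots\phi_t(g^{n_t})$. (The order of terms matters, so $\alpha+\beta$ and $\beta+\alpha$ may act differently.) *)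

(* Defs.v *)
From Stdlib Require Import ZArith List.
Import ListNotations.
Set Implicit Arguments.

Record Group := {
  carrier :> Type;
  gmul : carrier -> carrier -> carrier;
  gone : carrier;
  ginv : carrier -> carrier;
  gmulA : forall x y z, gmul x (gmul y z) = gmul (gmul x y) z;
  gmul1l : forall x, gmul gone x = x;
  gmul1r : forall x, gmul x gone = x;
  gmulVl : forall x, gmul (ginv x) x = gone;
  gmulVr : forall x, gmul x (ginv x) = gone }.

Arguments gmul {g}.
Arguments gone {g}.
Arguments ginv {g}.

Record Endo (G : Group) := {
  efun :> G -> G;
  efun_mul : forall x y, efun (gmul x y) = gmul (efun x) (efun y) }.

Fixpoint gpow_nat {G : Group} (g : G) (n : nat) : G :=
  match n with O => gone | S k => gmul g (gpow_nat g k) end.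

Definition gpow {G : Group} (g : G) (n : Z) : G :=
  if (0 <=? n)%Z then gpow_nat g (Z.to_nat n) else ginv (gpow_nat g (Z.abs_nat n)).

Definition nonabelian (G : Group) : Prop := exists x y : G, gmul x y <> gmul y x.

Definition central {G : Group} (z : G) : Prop := forall x : G, gmul z x = gmul x z.

Definition comm {G : Group} (x y : G) : G := gmul (gmul (ginv x) (ginv y)) (gmul x y).

Inductive in_derived {G : Group} : G -> Prop :=
  | der_comm : forall x y, in_derived (comm x y)
  | der_one : in_derived gone
  | der_mul : forall x y, in_derived x -> in_derived y -> in_derived (gmul x y)
  | der_inv : forall x, in_derived x -> in_derived (ginv x).

Definition congZ {G : Group} (x y : G) : Prop := exists z, central z /\ x = gmul y z.

(* Formal expressions n_1 φ_1 + ... + n_t φ_t, as a list of (n_i, φ_i);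
   the sum α + β is list concatenation. *)
Definition Expr (G : Group) := list (Z * Endo G).
Definition expr_add (G : Group) (a b : Expr G) : Expr G := a ++ b.

Fixpoint expr_act {G : Group} (a : Expr G) (g : G) : G :=
  match a with
  | [] => gone
  | (n, phi) :: rest => gmul (phi (gpow g n)) (expr_act rest g)
  end.

Definition psi_of {G : Group} (psi : Endo G) (a : Expr G) (g : G) : G := psi (expr_act a g).

(* Main.v *)
Require Import Defs.
From Stdlib Require Import ZArith List.
Import ListNotations.

Section S.
Variable G : Group.
Implicit Types x y z a b c d : G.

Lemma mulA x y z : gmul x (gmul y z) = gmul (gmul x y) z.
Proof. apply gmulA. Qed.

Lemma cancel_l x y z : gmul x y = gmul x z -> y = z.
Proof. intro H. rewrite <- (gmul1l _ y), <- (gmul1l _ z), <- (gmulVl _ x), <- !gmulA, H. reflexivity. Qed.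

Lemma inv_unique x y : gmul x y = gone -> y = ginv x.
Proof. intro H. apply (cancel_l x). rewrite H, gmulVr. reflexivity. Qed.

Lemma inv_inv x : ginv (ginv x) = x.
Proof. symmetry. apply inv_unique. apply gmulVl. Qed.

Lemma inv_one : ginv (@gone G) = gone.
Proof. symmetry. apply inv_unique. apply gmul1l. Qed.

Lemma inv_mul x y : ginv (gmul x y) = gmul (ginv y) (ginv x).
Proof. symmetry. apply inv_unique.
  rewrite <- gmulA, (gmulA _ y), gmulVr, gmul1l, gmulVr. reflexivity. Qed.

Lemma pow_one n : gpow_nat (@gone G) n = gone.
Proof. induction n; simpl; [reflexivity|rewrite IHn; apply gmul1l]. Qed.

Lemma gpow_one n : gpow (@gone G) n = gone.
Proof. unfold gpow. destruct (0 <=? n)%Z; rewrite pow_one; [reflexivity| apply inv_one]. Qed.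

Lemma endo_one (phi : Endo G) : phi gone = gone.
Proof. apply (cancel_l (phi gone)). rewrite <- efun_mul, !gmul1r. reflexivity. Qed.

Lemma endo_inv (phi : Endo G) x : phi (ginv x) = ginv (phi x).
Proof. apply inv_unique. rewrite <- efun_mul, gmulVr. apply endo_one. Qed.

Lemma endo_comm (phi : Endo G) x y : phi (comm x y) = comm (phi x) (phi y).
Proof. unfold comm. rewrite !efun_mul, !endo_inv. reflexivity. Qed.

Lemma der_conj d y : in_derived d -> in_derived (gmul (gmul (ginv y) d) y).
Proof. intro Hd.
  replace (gmul (gmul (ginv y) d) y) with (gmul d (comm d y)).
  - apply der_mul; [assumption|apply der_comm].
  - unfold comm. rewrite !gmulA, gmulVr, gmul1l. reflexivity.
Qed.

Definition D x y := exists d, in_derived d /\ x = gmul y d.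

Lemma D_refl x : D x x.
Proof. exists gone. split; [constructor| symmetry; apply gmul1r]. Qed.

Lemma D_sym x y : D x y -> D y x.
Proof. intros [d [Hd ->]]. exists (ginv d). split; [constructor; auto|].
  rewrite <- gmulA, gmulVr, gmul1r. reflexivity. Qed.

Lemma D_trans x y z : D x y -> D y z -> D x z.
Proof. intros [d [Hd ->]] [e [He ->]]. exists (gmul e d). split; [constructor; auto|].
  symmetry; apply gmulA. Qed.

Lemma D_mul x y x' y' : D x y -> D x' y' -> D (gmul x x') (gmul y y').
Proof. intros [d [Hd ->]] [e [He ->]].
  exists (gmul (gmul (gmul (ginv y') d) y') e). split.
  - apply der_mul; [apply der_conj; auto | auto].
  - rewrite !gmulA. f_equal. rewrite <- !gmulA. f_equal.
    rewrite !gmulA, gmulVr, gmul1l. reflexivity.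
Qed.

Lemma D_comm x y : D (gmul x y) (gmul y x).
Proof. exists (comm x y). split; [constructor|]. unfold comm.
  rewrite !gmulA. rewrite <- (gmulA _ y x), gmulVr, gmul1r, gmulVr, gmul1l. reflexivity. Qed.

Lemma D_inv x y : D x y -> D (ginv x) (ginv y).
Proof. intros [d [Hd ->]]. rewrite inv_mul.
  eapply D_trans; [apply D_comm|].
  exists (ginv d). split; [constructor; auto|reflexivity]. Qed.

Lemma D_endo (phi : Endo G) x y : D x y -> D (phi x) (phi y).
Proof. intros [d [Hd ->]]. exists (phi d). split; [|apply efun_mul].
  induction Hd.
  - rewrite endo_comm. constructor.
  - rewrite endo_one. constructor.
  - rewrite efun_mul. constructor; auto.
  - rewrite endo_inv. constructor; auto.
Qed.

Lemma D_swap4 a b c d : D (gmul (gmul a b) (gmul c d)) (gmul (gmul a c) (gmul b d)).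
Proof. rewrite !gmulA. apply D_mul; [|apply D_refl]. rewrite <- !gmulA.
  apply D_mul; [apply D_refl| apply D_comm]. Qed.

Lemma D_pow_nat g h n : D (gpow_nat (gmul g h) n) (gmul (gpow_nat g n) (gpow_nat h n)).
Proof. induction n; simpl.
  - rewrite gmul1l. apply D_refl.
  - eapply D_trans; [apply D_mul; [apply D_refl|apply IHn]|]. apply D_swap4. Qed.

Lemma D_pow g h n : D (gpow (gmul g h) n) (gmul (gpow g n) (gpow h n)).
Proof. unfold gpow. destruct (0 <=? n)%Z; [apply D_pow_nat|].
  eapply D_trans; [apply D_inv, D_pow_nat|]. rewrite inv_mul. apply D_comm. Qed.

Lemma act_app (a b : Expr G) g : expr_act (a ++ b) g = gmul (expr_act a g) (expr_act b g).
Proof. induction a as [|[n phi] a IH]; simpl.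
  - symmetry; apply gmul1l.
  - rewrite IH. apply gmulA. Qed.

Lemma act_one (a : Expr G) : expr_act a gone = gone.
Proof. induction a as [|[n phi] a IH]; simpl; [reflexivity|].
  rewrite IH, gpow_one, endo_one. apply gmul1l. Qed.

Lemma D_act (a : Expr G) g h : D (expr_act a (gmul g h)) (gmul (expr_act a g) (expr_act a h)).
Proof. induction a as [|[n phi] a IH]; simpl.
  - rewrite gmul1l. apply D_refl.
  - eapply D_trans; [apply D_mul; [apply D_endo, D_pow| apply IH]|].
    rewrite efun_mul. apply D_swap4. Qed.

Lemma D_act_inv (a : Expr G) g : D (expr_act a (ginv g)) (ginv (expr_act a g)).
Proof.
  assert (H : D (gmul (expr_act a g) (expr_act a (ginv g))) gone).
  { rewrite <- (act_one a), <- (gmulVr _ g). apply D_sym, D_act. }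
  destruct H as [d [Hd E]]. rewrite gmul1l in E.
  exists d. split; auto. apply (cancel_l (expr_act a g)).
  rewrite E, gmulA, gmulVr, gmul1l. reflexivity.
Qed.

Lemma congZ_sym x y : congZ x y -> congZ y x.
Proof. intros [z [Hz ->]]. exists (ginv z). split.
  - intro w. apply (cancel_l z). rewrite gmulA, gmulVr, gmul1l, gmulA, Hz, <- gmulA, gmulVr, gmul1r. reflexivity.
  - rewrite <- gmulA, gmulVr, gmul1r. reflexivity. Qed.

Variable psi : Endo G.
Hypothesis Hpsi : forall x : G, in_derived x -> central (psi x).

Lemma D_congZ x y : D x y -> congZ (psi x) (psi y).
Proof. intros [d [Hd ->]]. exists (psi d). split; [auto| apply efun_mul]. Qed.

End S.

Theorem lemma3p1 (G : Group) (psi : Endo G) (alpha beta : Expr G) :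
  nonabelian G ->
  (forall x : G, in_derived x -> central (psi x)) ->
  psi_of psi alpha gone = gone /\
  (forall g : G,
     congZ (psi_of psi (expr_add alpha beta) g) (psi_of psi (expr_add beta alpha) g)) /\
  (forall g h : G,
     congZ (psi_of psi alpha (gmul g h)) (gmul (psi_of psi alpha g) (psi_of psi alpha h))) /\
  (forall g : G, congZ (ginv (psi_of psi alpha g)) (psi_of psi alpha (ginv g))) /\
  (forall g h : G,
     congZ (gmul (psi_of psi alpha (gmul g h)) (ginv (psi_of psi alpha g))) (psi_of psi alpha h)).
Proof.
  intros _ Hpsi. unfold psi_of, expr_add. split; [|split; [|split; [|split]]].
  - rewrite act_one. apply endo_one.
  - intro g. apply D_congZ; auto. rewrite !act_app. apply D_comm.
  - intros g h. rewrite <- efun_mul. apply D_congZ; auto. apply D_act.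
  - intro g. rewrite <- endo_inv. apply congZ_sym. apply D_congZ; auto. apply D_act_inv.
  - intros g h. rewrite <- endo_inv, <- efun_mul. apply D_congZ; auto.
    eapply D_trans; [apply D_mul; [apply D_act|apply D_refl]|].
    eapply D_trans; [apply D_mul; [apply D_comm|apply D_refl]|].
    rewrite <- gmulA, gmulVr, gmul1r. apply D_refl.
Qed.
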